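(* Let $n,m$ be even integers with $2\le m\le n$ (for the second formula) and $n\ge0$ (for the first), let $h_l$ be the orthonormal Hermite polynomials for the weight $e^{-x^2}$ on $\mathbb{R}$, and let $\lambda_{\frac n2+1}$ and $\lambda^{m/2}_{\frac{n-m}2+1}$ be the smallest zeros of $p^{(-1/2)}_{\frac n2+1}(x)$ and $p^{(-1/2)}_{\frac{n-m}2+1}(x,\frac m2)$. For constants $\kappa_1,\kappa_2\in\mathbb{C}$ let $\mathcal{H}_n(x)=\kappa_1\sum_{l=0}^{n/2}p^{(-1/2)}_l(\lambda_{\frac n2+1})h_{2l}(x)$ and $\mathcal{H}^m_n(x)=\kappa_2\sum_{l=m/2}^{n/2}p^{(-1/2)}_{l-\frac m2}(\lambda^{m/2}_{\frac{n-m}2+1},\frac m2)h_{2l}(x)$. Then for $x^2$ different from the respective zero, $\mathcal{H}_n(x)=\kappa_1b_{\frac n2+1}\,p^{(-1/2)}_{n/2}(\lambda_{\frac n2+1})\dfrac{h_{n+2}(x)}{x^2-\lambda_{\frac n2+1}}$, $\mathcal{H}^m_n(x)=\kappa_2\dfrac{b_{\frac n2+1}\,p^{(-1/2)}_{\frac{n-m}2}(\lambda^{m/2}_{\frac{n-m}2+1},\frac m2)\,h_{n+2}(x)+b_{m/2}\,h_{m-2}(x)}{x^2-\lambda^{m/2}_{\frac{n-m}2+1}}$, where $b_k=\sqrt{k(k-\frac12)}$ are the Laguerre recurrence coefficients for $\alpha=-\frac12$.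
   Context: $p^{(\alpha)}_l$ are the orthonormal Laguerre polynomials in $L^2([0,\infty),x^\alpha e^{-x})$ with positive leading coefficients; they satisfy $b_{l+1}p^{(\alpha)}_{l+1}(x)=(x-a_l)p^{(\alpha)}_l(x)-b_lp^{(\alpha)}_{l-1}(x)$ with $a_l=2l+\alpha+1$, $b_l=\sqrt{l(l+\alpha)}$ ($l\ge1$). Associated Laguerre polynomials: $p^{(\alpha)}_{-1}(x,M)=0$, $p^{(\alpha)}_0(x,M)=1$, $b_{M+l+1}p^{(\alpha)}_{l+1}(x,M)=(x-a_{M+l})p^{(\alpha)}_l(x,M)-b_{M+l}p^{(\alpha)}_{l-1}(x,M)$. One has $h_{2l}(x)=p^{(-1/2)}_l(x^2)$. With $\kappa_1,\kappa_2$ normalizing, $\mathcal{H}_n$, $\mathcal{H}^m_n$ are the minimizers of $\int x^2|P|^2e^{-x^2}dx$ over normalized polynomials in $\operatorname{span}\{h_0,\dots,h_n\}$, resp. $\operatorname{span}\{h_m,\dots,h_n\}$. *)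

(* Defs.v *)
From HB Require Import structures.
From mathcomp Require Import all_boot all_order all_algebra.
From mathcomp Require Import reals trigo.
From mathcomp Require Import complex.
Set Implicit Arguments. Unset Strict Implicit. Unset Printing Implicit Defensive.
Import Order.TTheory GRing.Theory Num.Theory.
Local Open Scope ring_scope.

Section Defs.
Variable R : realType.

Definition lag_a (alpha : R) (l : nat) : R := 2 * l%:R + alpha + 1.
Definition lag_b (alpha : R) (l : nat) : R := Num.sqrt (l%:R * (l%:R + alpha)).

(* lag_pair alpha M c x l = (q_{l-1}(x), q_l(x)) where q_{-1} = 0, q_0 = c and
   b_{M+l+1} q_{l+1} = (x - a_{M+l}) q_l - b_{M+l} q_{l-1}. *)
Fixpoint lag_pair (alpha : R) (M : nat) (c x : R) (l : nat) : R * R :=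
  match l with
  | 0 => (0, c)
  | l'.+1 =>
      let (u, v) := lag_pair alpha M c x l' in
      (v, ((x - lag_a alpha (M + l')) * v - lag_b alpha (M + l') * u)
            / lag_b alpha (M + l').+1)
  end.

Definition alpha0 : R := - (2%:R)^-1.

(* p_0^{(-1/2)} = (int_0^oo x^{-1/2} e^{-x} dx)^{-1/2} = Gamma(1/2)^{-1/2} = pi^{-1/4} *)
Definition lag_p0 : R := (Num.sqrt (Num.sqrt pi))^-1.

Definition lagN (l : nat) (x : R) : R := (lag_pair alpha0 0 lag_p0 x l).2.

Definition lagA (l M : nat) (x : R) : R := (lag_pair alpha0 M 1 x l).2.

Definition bl (k : nat) : R := lag_b alpha0 k.

Fixpoint herm_pair (x : R) (k : nat) : R * R :=
  match k with
  | 0 => (0, (Num.sqrt (Num.sqrt pi))^-1)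
  | k'.+1 =>
      let (u, v) := herm_pair x k' in
      (v, (x * v - Num.sqrt (k'%:R / 2%:R) * u) / Num.sqrt (k'.+1%:R / 2%:R))
  end.

Definition hermite (k : nat) (x : R) : R := (herm_pair x k).2.

Local Open Scope complex_scope.

Definition calH (kappa1 : R[i]) (n : nat) (lam x : R) : R[i] :=
  kappa1 * (\sum_(0 <= l < (n./2).+1) lagN l lam * hermite (2 * l) x)%:C.

Definition calHm (kappa2 : R[i]) (n m : nat) (lam x : R) : R[i] :=
  kappa2 * (\sum_(m./2 <= l < (n./2).+1)
              lagA (l - m./2) (m./2) lam * hermite (2 * l) x)%:C.

Definition smallest_zero (f : R -> R) (lam : R) : Prop :=
  f lam = 0 /\ forall z, f z = 0 -> lam <= z.

End Defs.

(* Main.v *)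
Require Import Defs.
From HB Require Import structures.
From mathcomp Require Import all_boot all_order all_algebra.
From mathcomp Require Import reals trigo.
From mathcomp Require Import complex.
From mathcomp Require Import ring lra.
Import Order.TTheory GRing.Theory Num.Theory.
Local Open Scope ring_scope.

Section Aux.
Variable R : realType.

Lemma bl_pos (k : nat) : (0 < k)%N -> 0 < bl R k.
Proof.
move=> k0; rewrite /bl /lag_b /alpha0 sqrtr_gt0.
have h1 : (1 : R) <= k%:R by rewrite ler1n.
apply: mulr_gt0; first lra.
have : (2%:R : R)^-1 = 1/2 by rewrite mul1r.
move=> ->; lra.
Qed.

Lemma bl0 : bl R 0 = 0.
Proof. by rewrite /bl /lag_b mul0r sqrtr0. Qed.

Lemma lpS1 (M : nat) (c x : R) l :
  (lag_pair (alpha0 R) M c x l.+1).1 = (lag_pair (alpha0 R) M c x l).2.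
Proof. by rewrite /=; case: (lag_pair _ _ _ _ l). Qed.

Lemma lpS2 (M : nat) (c x : R) l :
  bl R (M + l).+1 * (lag_pair (alpha0 R) M c x l.+1).2 =
  (x - lag_a (alpha0 R) (M + l)) * (lag_pair (alpha0 R) M c x l).2
   - bl R (M + l) * (lag_pair (alpha0 R) M c x l).1.
Proof.
have nz : bl R (M + l).+1 != 0 by rewrite gt_eqF // bl_pos.
rewrite /=; case: (lag_pair _ _ _ _ l) => u v /=.
rewrite /bl in nz *; by rewrite mulrC divfK.
Qed.


Lemma lpS2' (M : nat) (c x : R) l :
  (lag_pair (alpha0 R) M c x l.+1).2 =
  ((x - lag_a (alpha0 R) (M + l)) * (lag_pair (alpha0 R) M c x l).2
   - bl R (M + l) * (lag_pair (alpha0 R) M c x l).1) / bl R (M + l).+1.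
Proof. by rewrite /=; case: (lag_pair _ _ _ _ l). Qed.

Lemma CD (M : nat) (c t lam : R) (K : nat) :
  (t - lam) * \sum_(0 <= j < K.+1)
     (lag_pair (alpha0 R) M c lam j).2 * (lag_pair (alpha0 R) 0 (lag_p0 R) t (M + j)).2
  = bl R (M + K).+1 * ((lag_pair (alpha0 R) M c lam K).2
                         * (lag_pair (alpha0 R) 0 (lag_p0 R) t (M + K).+1).2
                       - (lag_pair (alpha0 R) M c lam K.+1).2
                         * (lag_pair (alpha0 R) 0 (lag_p0 R) t (M + K)).2)
    + c * bl R M * (lag_pair (alpha0 R) 0 (lag_p0 R) t M).1.
Proof.
set P := lag_pair (alpha0 R) 0 (lag_p0 R) t.
set Q := lag_pair (alpha0 R) M c lam.
have PS2 k : (P k.+1).2 = ((t - lag_a (alpha0 R) k) * (P k).2 - bl R k * (P k).1) / bl R k.+1.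
  by have := lpS2' 0 (lag_p0 R) t k; rewrite add0n.
have PS1 k : (P k.+1).1 = (P k).2 by exact: lpS1.
have QS1 k : (Q k.+1).1 = (Q k).2 by exact: lpS1.
have QS2 k : (Q k.+1).2 = ((lam - lag_a (alpha0 R) (M + k)) * (Q k).2 - bl R (M + k) * (Q k).1) / bl R (M + k).+1.
  exact: lpS2'.
have nz k : bl R k.+1 != 0 by rewrite gt_eqF // bl_pos.
elim: K => [|K IH].
  rewrite big_nat1 addn0 PS2 QS2 addn0.
  have -> : (Q 0).2 = c by [].
  have -> : (Q 0).1 = 0 by [].
  by field.
rewrite big_nat_recr //= mulrDr IH.
rewrite !addnS (PS2 (M + K).+1) (QS2 K.+1) PS1 QS1 addnS.
by field.
Qed.

Definition sq (k : nat) : R := Num.sqrt (k%:R / 2%:R).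

Lemma hpS (x : R) k : herm_pair x k.+1 =
  ((herm_pair x k).2, (x * (herm_pair x k).2 - sq k * (herm_pair x k).1) / sq k.+1).
Proof. by rewrite /=; case: (herm_pair x k). Qed.

Lemma lpS (M : nat) (c x : R) l :
  lag_pair (alpha0 R) M c x l.+1 = ((lag_pair (alpha0 R) M c x l).2,
  ((x - lag_a (alpha0 R) (M + l)) * (lag_pair (alpha0 R) M c x l).2
   - bl R (M + l) * (lag_pair (alpha0 R) M c x l).1) / bl R (M + l).+1).
Proof. by rewrite /=; case: (lag_pair _ _ _ _ l). Qed.

Lemma sq2 k : sq k ^+ 2 = k%:R / 2.
Proof. by rewrite /sq sqr_sqrtr //; apply: divr_ge0; rewrite ler0n. Qed.

Lemma sq_nz k : sq k.+1 != 0.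
Proof. by rewrite /sq gt_eqF // sqrtr_gt0; apply: divr_gt0; rewrite ltr0n. Qed.

Lemma sqM (a b : nat) : sq a * sq b = Num.sqrt (a%:R / 2 * (b%:R / 2)).
Proof. by rewrite /sq -sqrtrM //; apply: divr_ge0; rewrite ler0n. Qed.

Lemma blsq l : bl R l = sq (2 * l)%N * sq (2 * l)%N.-1.
Proof.
case: l => [|l].
  by rewrite bl0 /sq muln0 mul0r sqrtr0 mul0r.
rewrite sqM /bl /lag_b /alpha0; congr Num.sqrt.
have -> : (2 * l.+1)%N.-1 = (2 * l + 1)%N by rewrite mulnS addn1.
rewrite mulnS -[l.+1]addn1 !natrD ?natrM; by field.
Qed.

Lemma herm_lag (x : R) l :
  (herm_pair x (2 * l)%N).2 = (lag_pair (alpha0 R) 0 (lag_p0 R) (x ^+ 2) l).2 /\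
  x * (herm_pair x (2 * l)%N).1 = sq (2 * l)%N * (lag_pair (alpha0 R) 0 (lag_p0 R) (x ^+ 2) l).2
     + sq (2 * l)%N.-1 * (lag_pair (alpha0 R) 0 (lag_p0 R) (x ^+ 2) l).1.
Proof.
elim: l => [|l [IH1 IH2]].
  by rewrite muln0 /= /sq mul0r sqrtr0 !mulr0 mul0r addr0.
have -> : (2 * l.+1 = (2 * l).+2)%N by rewrite mulnS.
rewrite !hpS lpS /= add0n.
set u := (herm_pair x (2 * l)%N).1 in IH2 *.
set v := (herm_pair x (2 * l)%N).2 in IH1 *.
set p := (lag_pair _ _ _ _ l).1 in IH2 *.
set q := (lag_pair _ _ _ _ l).2 in IH1 IH2 *.
rewrite IH1.
have hs0 := sq2 (2 * l)%N; have hs1 := sq2 (2 * l)%N.+1; have hs2 := sq2 (2 * l)%N.+2.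
have n1 := sq_nz (2 * l)%N; have n2 := sq_nz (2 * l)%N.+1.
have ha : lag_a (alpha0 R) l = (2 * l)%N%:R / 2 + (2 * l)%N.+1%:R / 2.
  rewrite /lag_a /alpha0 -[(2 * l)%N.+1]addn1 !natrD ?natrM; by field.
have hb1 : bl R l.+1 = sq (2 * l)%N.+1 * sq (2 * l)%N.+2.
  rewrite sqM /bl /lag_b /alpha0; congr Num.sqrt.
  rewrite -[(2 * l)%N.+2]addn2 -[(2 * l)%N.+1]addn1 -[l.+1]addn1 !natrD ?natrM; by field.
have hb0 := blsq l.
have hmain : (x * ((x * q - sq (2 * l)%N * u) / sq (2 * l)%N.+1) - sq (2 * l)%N.+1 * q) / sq (2 * l)%N.+2
   = ((x ^+ 2 - lag_a (alpha0 R) l) * q - bl R l * p) / bl R l.+1.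
  rewrite hb1 hb0 ha -hs0 -hs1.
  have -> : x * ((x * q - sq (2 * l)%N * u) / sq (2 * l)%N.+1) =
     (x ^+ 2 * q - sq (2 * l)%N * (x * u)) / sq (2 * l)%N.+1 by field.
  rewrite IH2; field; by rewrite n1 n2.
split => //.
rewrite -hmain; field; by rewrite n1 n2.
Qed.

End Aux.

Local Open Scope complex_scope.

Theorem corollary5p3 (R : realType) (n : nat) (hn : ~~ odd n) :
  (forall (kappa1 : R[i]) (lam x : R),
     smallest_zero (lagN (n./2).+1) lam -> x ^+ 2 != lam ->
     calH kappa1 n lam x =
       kappa1 * (bl R (n./2).+1 * lagN (n./2) lam * hermite (n + 2) x
                 / (x ^+ 2 - lam))%:C)
  /\
  (forall (m : nat), ~~ odd m -> (2 <= m <= n)%N ->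
   forall (kappa2 : R[i]) (lam x : R),
     smallest_zero (lagA ((n - m)./2).+1 (m./2)) lam -> x ^+ 2 != lam ->
     calHm kappa2 n m lam x =
       kappa2 * ((bl R (n./2).+1 * lagA ((n - m)./2) (m./2) lam * hermite (n + 2) x
                  + bl R (m./2) * hermite (m - 2) x)
                 / (x ^+ 2 - lam))%:C).
Proof.
have [N hN] : exists N, n = (2 * N)%N.
  by exists n./2; rewrite -{1}(odd_double_half n) (negbTE hn) add0n mul2n.
have hN2 : n./2 = N by rewrite hN mul2n doubleK.
have hn2 : (n + 2 = 2 * N.+1)%N.
  by rewrite hN mulnS addnC.
split.
  move=> k1 lam x [Hz _] hne.
  rewrite /calH hN2 hn2; rewrite hN2 in Hz.
  congr (_ * _%:C).
  have dnz : x ^+ 2 - lam != 0 by rewrite subr_eq0.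
  apply: (mulfI dnz); rewrite [RHS]mulrC divfK //.
  rewrite (eq_bigr (fun l => (lag_pair (alpha0 R) 0 (lag_p0 R) lam l).2
          * (lag_pair (alpha0 R) 0 (lag_p0 R) (x ^+ 2) (0 + l)).2)); last first.
    by move=> l _; rewrite add0n; rewrite /hermite (@herm_lag R x l).1.
  rewrite (@CD R 0 (lag_p0 R) (x ^+ 2) lam N) bl0 ?mulr0 ?mul0r ?addr0 !add0n.
  have Hz' : (lag_pair (alpha0 R) 0 (lag_p0 R) lam N.+1).2 = 0 := Hz.
  rewrite Hz' mul0r subr0 /hermite (@herm_lag R x N.+1).1 /lagN; ring.
move=> m hm /andP[m2 mn] k2 lam x [Hz _] hne.
have [M hM] : exists M, m = (2 * M)%N.
  by exists m./2; rewrite -{1}(odd_double_half m) (negbTE hm) add0n mul2n.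
have hM2 : m./2 = M by rewrite hM mul2n doubleK.
case: M hM hM2 => [|M'] hM hM2; first by rewrite hM in m2.
have MN : (M'.+1 <= N)%N by move: mn; rewrite hM hN leq_pmul2l.
set M := M'.+1 in hM hM2 MN *.
set K := (N - M)%N.
have hK : (n - m)%N./2 = K by rewrite hN hM -mulnBr mul2n doubleK.
have hm2 : (m - 2 = 2 * M')%N by rewrite hM mulnS addKn.
rewrite /calHm hN2 hM2 hK hn2 hm2; rewrite hK hM2 in Hz.
congr (_ * _%:C).
have dnz : x ^+ 2 - lam != 0 by rewrite subr_eq0.
apply: (mulfI dnz); rewrite [RHS]mulrC divfK //.
rewrite -{1}(add0n M) big_addn.
have -> : (N.+1 - M = K.+1)%N by rewrite /K subSn.
rewrite (eq_bigr (fun j => (lag_pair (alpha0 R) M 1 lam j).2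
          * (lag_pair (alpha0 R) 0 (lag_p0 R) (x ^+ 2) (M + j)).2)); last first.
  move=> j _; rewrite addnK addnC; by rewrite /hermite (@herm_lag R x (M + j)).1.
rewrite (@CD R M 1 (x ^+ 2) lam K).
have MK : (M + K = N)%N by rewrite /K subnKC.
rewrite MK.
have Hz' : (lag_pair (alpha0 R) M 1 lam K.+1).2 = 0 := Hz.
rewrite Hz' mul0r subr0 mul1r /M lpS1 /hermite (@herm_lag R x N.+1).1 (@herm_lag R x M').1.
rewrite /lagA; ring.
Qed.
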